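(* For $i\in\{1,\dots,m\}$ let $q_i(y)=y^\top A_iy+2b_i^\top y+c_i$ with $A_i\in\mathbb{S}^{n-1}$, $b_i\in\mathbb{R}^{n-1}$, $c_i\in\mathbb{R}$, let $M_i=\begin{pmatrix}c_i & b_i^\top\\ b_i & A_i\end{pmatrix}\in\mathbb{S}^n$, $\mathcal{M}=\{M_1,\dots,M_m\}$, and $\mathcal{Y}=\{y\in\mathbb{R}^{n-1}: q_i(y)\ge 0\ \forall i\in\{1,\dots,m\}\}$. Suppose there exists $\lambda^*\in\mathbb{R}^m_+$ such that $\sum_{i=1}^m\lambda^*_iA_i$ is negative definite. If $\mathcal{S}(\mathcal{M})$ is rank-one generated, then $$\mathrm{conv}(\mathcal{Y})=\left\{y\in\mathbb{R}^{n-1}:\ \exists\, Y\in\mathbb{S}^{n-1},\ Y\succeq yy^\top,\ \langle A_i,Y\rangle+2\langle b_i,y\rangle+c_i\ge 0\ \forall i\in\{1,\dots,m\}\right\};$$ in particular $\mathrm{conv}(\mathcal{Y})$ is semidefinite-representable.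
   Context: $\mathbb{S}^n$ denotes real symmetric $n\times n$ matrices with $\langle A,B\rangle=\mathrm{tr}(AB)$, $\mathbb{S}^n_+$ the PSD cone, and $Y\succeq Z$ means $Y-Z$ is PSD. For $\mathcal{M}\subseteq\mathbb{S}^n$, $\mathcal{S}(\mathcal{M})=\{X\in\mathbb{S}^n_+:\langle M,X\rangle\ge0\ \forall M\in\mathcal{M}\}$. A closed convex cone $\mathcal{S}\subseteq\mathbb{S}^n_+$ is rank-one generated (ROG) if $\mathcal{S}=\mathrm{conv}(\mathcal{S}\cap\{xx^\top:x\in\mathbb{R}^n\})$. *)

(* Defs.v *)
From HB Require Import structures.
From mathcomp Require Import all_boot all_order all_algebra.
From mathcomp Require Import reals.
Set Implicit Arguments. Unset Strict Implicit. Unset Printing Implicit Defensive.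
Import Order.TTheory GRing.Theory Num.Theory.
Local Open Scope ring_scope.

Definition symmat (R : realType) (n : nat) (X : 'M[R]_n) : Prop := X^T = X.

Definition psd (R : realType) (n : nat) (X : 'M[R]_n) : Prop :=
  symmat X /\ forall x : 'cV[R]_n, 0 <= (x^T *m X *m x) 0 0.

Definition inner (R : realType) (n : nat) (A B : 'M[R]_n) : R := \tr (A *m B).

Definition SM (R : realType) (n m : nat) (Ms : 'I_m -> 'M[R]_n) (X : 'M[R]_n) : Prop :=
  psd X /\ forall i, 0 <= inner (Ms i) X.

Definition conv (R : realType) (V : lmodType R) (P : V -> Prop) (v : V) : Prop :=
  exists (k : nat) (w : 'I_k -> R) (p : 'I_k -> V),
    (forall j, 0 <= w j) /\ \sum_j w j = 1 /\ (forall j, P (p j)) /\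
    v = \sum_j w j *: p j.

Definition rank_one_psd (R : realType) (n : nat) (X : 'M[R]_n) : Prop :=
  exists x : 'cV[R]_n, X = x *m x^T.

Definition ROG (R : realType) (n : nat) (S : 'M[R]_n -> Prop) : Prop :=
  forall X, S X <-> conv (fun Z => S Z /\ rank_one_psd Z) X.

Definition homog (R : realType) (n : nat) (A : 'M[R]_n) (b : 'cV[R]_n) (c : R)
  : 'M[R]_(1 + n) := block_mx c%:M b^T b A.

Definition quad (R : realType) (n : nat) (A : 'M[R]_n) (b : 'cV[R]_n) (c : R)
  (y : 'cV[R]_n) : R := (y^T *m A *m y) 0 0 + 2 * (b^T *m y) 0 0 + c.

(* Main.v *)
Require Import Defs.
From HB Require Import structures.
From mathcomp Require Import all_boot all_order all_algebra.
From mathcomp Require Import reals.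
From mathcomp Require Import ring lra.
Import Order.TTheory GRing.Theory Num.Theory.
Set Implicit Arguments. Unset Strict Implicit.
Local Open Scope ring_scope.

Section H.
Variable R : realType.

Definition qf (n : nat) (M : 'M[R]_n) (x : 'cV[R]_n) : R := (x^T *m M *m x) 0 0.

Lemma mx11_mulE (p : nat) (M : 'M[R]_(1,p)) (N : 'M[R]_(p,1)) :
  (M *m N) 0 0 = \sum_k M 0 k * N k 0.
Proof. by rewrite mxE. Qed.

Lemma mx11_mul (M N : 'M[R]_1) : (M *m N) 0 0 = M 0 0 * N 0 0.
Proof. by rewrite mxE big_ord1. Qed.

Lemma outerE (n : nat) (x : 'cV[R]_n) a b : (x *m x^T) a b = x a 0 * x b 0.
Proof. by rewrite mxE big_ord1 mxE. Qed.

Lemma dot_sym (n : nat) (u v : 'cV[R]_n) : (u^T *m v) 0 0 = (v^T *m u) 0 0.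
Proof. rewrite !mxE; apply: eq_bigr => k _; rewrite !mxE mulrC //. Qed.

Lemma inner_outer (n : nat) (M : 'M[R]_n) (x : 'cV[R]_n) :
  inner M (x *m x^T) = qf M x.
Proof. by rewrite /inner /qf mulmxA mxtrace_mulC mulmxA trace_mx11. Qed.

Lemma qf_outer (n : nat) (x v : 'cV[R]_n) : qf (x *m x^T) v = ((v^T *m x) 0 0) ^+ 2.
Proof. rewrite /qf !mulmxA -mulmxA mx11_mul. rewrite (dot_sym x v). rewrite [in RHS]expr2. reflexivity. Qed.

Lemma qf_sum (n k : nat) (w : 'I_k -> R) (M : 'I_k -> 'M[R]_n) v :
  qf (\sum_j w j *: M j) v = \sum_j w j * qf (M j) v.
Proof.
rewrite /qf mulmx_sumr mulmx_suml summxE; apply: eq_bigr => j _.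
by rewrite -scalemxAr -scalemxAl mxE.
Qed.

Lemma qf_sub (n : nat) (M N : 'M[R]_n) v : qf (M - N) v = qf M v - qf N v.
Proof.
have h : forall P Q : 'M[R]_1, (P - Q) 0 0 = P 0 0 - Q 0 0 by move=> P Q; rewrite !mxE.
by rewrite /qf mulmxBr mulmxBl h.
Qed.

Lemma qf_block (n : nat) (A : 'M[R]_n) (b : 'cV[R]_n) (c : R) (t : 'cV[R]_1) z :
  qf (homog A b c) (col_mx t z) =
  t 0 0 ^+ 2 * c + 2 * t 0 0 * (b^T *m z) 0 0 + qf A z.
Proof.
rewrite /qf /homog tr_col_mx mul_row_block mul_row_col.
rewrite [t]mx11_scalar tr_scalar_mx !mul_scalar_mx !mulmxDl.
rewrite -!scalemxAl !mul_mx_scalar.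
have eA : forall P Q : 'M[R]_1, (P + Q) 0 0 = P 0 0 + Q 0 0 by move=> P Q; rewrite !mxE.
have eS : forall a (P : 'M[R]_1), (a *: P) 0 0 = a * P 0 0 by move=> a P; rewrite !mxE.
have eC : forall a : R, (a%:M : 'M[R]_1) 0 0 = a by move=> a; rewrite !mxE.
rewrite !eA !eS !eC (dot_sym z b); ring.
Qed.

Lemma e11A (P Q : 'M[R]_1) : (P + Q) 0 0 = P 0 0 + Q 0 0. Proof. by rewrite !mxE. Qed.
Lemma e11S a (P : 'M[R]_1) : (a *: P) 0 0 = a * P 0 0. Proof. by rewrite !mxE. Qed.
Lemma e11C (a : R) : (a%:M : 'M[R]_1) 0 0 = a. Proof. by rewrite !mxE. Qed.

Lemma trZ (p q : nat) k (z : 'M[R]_(p,q)) : (k *: z)^T = k *: z^T.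
Proof. by apply/matrixP => i j; rewrite !mxE. Qed.

Lemma qf_scale (n : nat) (A : 'M[R]_n) k (z : 'cV[R]_n) : qf A (k *: z) = k ^+ 2 * qf A z.
Proof. by rewrite /qf trZ -!scalemxAl -scalemxAr !e11S mulrA expr2. Qed.

Lemma dotZ (n : nat) (b : 'cV[R]_n) k (z : 'cV[R]_n) : (b^T *m (k *: z)) 0 0 = k * (b^T *m z) 0 0.
Proof. by rewrite -scalemxAr e11S. Qed.

Lemma qf_homog_quad (n : nat) (A : 'M[R]_n) (b : 'cV[R]_n) (c : R) (t : 'cV[R]_1) z :
  t 0 0 != 0 ->
  qf (homog A b c) (col_mx t z) = t 0 0 ^+ 2 * quad A b c ((t 0 0)^-1 *: z).
Proof.
move=> ht; rewrite qf_block /quad dotZ.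
have -> : ((t 0 0)^-1 *: z)^T *m A *m ((t 0 0)^-1 *: z) = ((t 0 0)^-1 *: z)^T *m A *m ((t 0 0)^-1 *: z) by [].
rewrite -/(qf A _) qf_scale; field; exact: ht.
Qed.

Lemma var_ineq (k : nat) (w a : 'I_k -> R) : (forall j, 0 <= w j) -> \sum_j w j = 1 ->
  (\sum_j w j * a j) ^+ 2 <= \sum_j w j * a j ^+ 2.
Proof.
move=> hw h1.
have e : forall mu, \sum_j w j * (a j - mu) ^+ 2 =
   \sum_j w j * a j ^+ 2 - (2 * mu) * \sum_j w j * a j + mu ^+ 2 * \sum_j w j.
  move=> mu; rewrite !mulr_sumr -sumrB -big_split /=; apply: eq_bigr => j _; ring.
have h0 : 0 <= \sum_j w j * (a j - \sum_j w j * a j) ^+ 2.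
  by apply: sumr_ge0 => j _; apply: mulr_ge0 => //; exact: sqr_ge0.
move: h0; rewrite e h1; set mu := \sum_j w j * a j => h0; lra.
Qed.

Lemma homog_psd (n : nat) (Y : 'M[R]_n) (y : 'cV[R]_n) :
  symmat Y -> psd (Y - y *m y^T) -> psd (homog Y y 1).
Proof.
move=> hY [_ hP]; split.
  by rewrite /symmat /homog tr_block_mx trmxK tr_scalar_mx hY.
move=> v; rewrite -(vsubmxK v).
have := hP (dsubmx v); rewrite -/(qf _ _) -/(qf _ _) qf_sub qf_outer qf_block dot_sym.
have key : forall u s q : R, 0 <= q - s ^+ 2 -> 0 <= u ^+ 2 * 1 + 2 * u * s + q.
  by move=> u s q h; have := sqr_ge0 (u + s); nra.
exact: key.
Qed.

Lemma inner_homog (n : nat) (A Y : 'M[R]_n) (b y : 'cV[R]_n) (c : R) :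
  inner (homog A b c) (homog Y y 1) = inner A Y + 2 * (b^T *m y) 0 0 + c.
Proof.
rewrite /inner /homog mulmx_block mxtrace_block !mxtraceD !trace_mx11.
rewrite mulmx1 e11C (mxtrace_mulC b) trace_mx11 (dot_sym y b); ring.
Qed.


Lemma sclE (p q : nat) k (M : 'M[R]_(p,q)) i j : (k *: M) i j = k * M i j.
Proof. by rewrite mxE. Qed.

Lemma inner_sum (n k : nat) (M : 'M[R]_n) (w : 'I_k -> R) (N : 'I_k -> 'M[R]_n) :
  inner M (\sum_j w j *: N j) = \sum_j w j * inner M (N j).
Proof.
rewrite /inner mulmx_sumr raddf_sum; apply: eq_bigr => j _.
by rewrite /= -scalemxAr mxtraceZ.
Qed.

Lemma dot_sum (n k : nat) (u : 'cV[R]_n) (w : 'I_k -> R) (p : 'I_k -> 'cV[R]_n) :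
  (u^T *m \sum_j w j *: p j) 0 0 = \sum_j w j * (u^T *m p j) 0 0.
Proof.
rewrite mulmx_sumr summxE; apply: eq_bigr => j _.
by rewrite -scalemxAr sclE.
Qed.

Lemma sq_pos (t : R) : t != 0 -> 0 < t ^+ 2.
Proof. by move=> ht; rewrite lt_def sqrf_eq0 ht sqr_ge0. Qed.

End H.

Unset Implicit Arguments. Set Strict Implicit.

Theorem proposition5p9 (R : realType) (n m : nat)
  (A : 'I_m -> 'M[R]_n) (b : 'I_m -> 'cV[R]_n) (c : 'I_m -> R)
  (hA : forall i, symmat (A i))
  (lam : 'I_m -> R) (hlam0 : forall i, 0 <= lam i)
  (hlamND : forall x : 'cV[R]_n, x != 0 ->
      (x^T *m (\sum_i lam i *: A i) *m x) 0 0 < 0)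
  (hROG : ROG (SM (fun i => homog (A i) (b i) (c i)))) :
  forall y : 'cV[R]_n,
    conv (fun z : 'cV[R]_n => forall i, 0 <= quad (A i) (b i) (c i) z) y <->
    exists Y : 'M[R]_n, symmat Y /\ psd (Y - y *m y^T) /\
      forall i, 0 <= inner (A i) Y + 2 * ((b i)^T *m y) 0 0 + c i.
Proof.
move=> y; split.
- case=> k [w [p [hw [h1 [hP ->]]]]].
  set Ym := \sum_j w j *: (p j *m (p j)^T).
  have symY : Ym^T = Ym.
    apply/matrixP => a a'; rewrite mxE !summxE; apply: eq_bigr => j _.
    by rewrite !sclE !outerE [p j a 0 * _]mulrC.
  exists Ym; split; first exact: symY.
  split.
    split.
      have subE : forall M N : 'M[R]_n, forall i j, (M - N) i j = M i j - N i j.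
        by move=> M N i j; rewrite !mxE.
      apply/matrixP => a a'; rewrite [LHS]mxE !subE !outerE mulrC.
      by have := congr1 (fun M : 'M[R]_n => M a a') symY; rewrite [X in X = _ -> _]mxE => ->.
    move=> v; rewrite -/(qf _ v) qf_sub qf_outer qf_sum dot_sum subr_ge0.
    rewrite [X in _ <= X](eq_bigr (fun j => w j * (v^T *m p j) 0 0 ^+ 2)) => [|j _]; first (have H := (@var_ineq R k w (fun j => (v^T *m p j) 0 0) hw h1); exact H).
    by rewrite (qf_outer (p j) v).
  move=> i; rewrite inner_sum dot_sum.
  under eq_bigr => j _ do rewrite inner_outer.
  rewrite -[c i]mulr1 -h1 !mulr_sumr -!big_split /=.
  apply: sumr_ge0 => j _.
  have := mulr_ge0 (hw j) (hP j i); rewrite /quad /qf => h; nra.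
- case=> Y [hYs [hP hc]].
  have hS : SM (fun i => homog (A i) (b i) (c i)) (homog Y y 1).
    split; first exact: homog_psd.
    by move=> i; rewrite inner_homog; exact: hc.
  case/hROG: hS => k [w [p [hw [h1 [hp hX]]]]].
  have [x hx] : exists x : 'I_k -> 'cV[R]_(1 + n), forall j, p j = x j *m (x j)^T.
    apply: (@fin_all_exists _ (fun _ => 'cV[R]_(1 + n)) (fun j xj => p j = xj *m xj^T)) => j; case: (hp j) => _ [x' ->]; by exists x'.
  pose t j := usubmx (x j) 0 0.
  pose z j := dsubmx (x j).
  have e1 : \sum_j w j * t j ^+ 2 = 1.
    have := congr1 (fun M : 'M[R]_(1 + n) => M (lshift n 0) (lshift n 0)) hX.
    rewrite /= /homog block_mxEul summxE => e.
    rewrite -[RHS](e11C 1) e; apply: eq_bigr => j _.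
    by rewrite sclE hx outerE /t mxE expr2.
  have e2 : forall a, y a 0 = \sum_j w j * (z j a 0 * t j).
    move=> a; have := congr1 (fun M : 'M[R]_(1 + n) => M (rshift 1 a) (lshift n 0)) hX.
    rewrite /= /homog block_mxEdl summxE => ->; apply: eq_bigr => j _.
    by rewrite sclE hx outerE /t /z !mxE.
  have [j0 hj0] : exists j0, t j0 != 0.
    case: (pickP (fun j => t j != 0)) => [j0 hj0 | hn]; first by exists j0.
    exfalso; move: e1; rewrite big1 => [|j _]; last first.
      by move/negbFE/eqP: (hn j) => ->; rewrite expr0n mulr0.
    by move/eqP; rewrite eq_sym oner_eq0.
  pose pt j := (t j)^-1 *: z j.
  have key : forall j i, t j != 0 -> 0 <= quad (A i) (b i) (c i) (pt j).
    move=> j i htj; have := (hp j).1.2 i.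
    rewrite hx inner_outer -(vsubmxK (x j)) qf_homog_quad //.
    by rewrite (pmulr_rge0 _ (sq_pos htj)).
  exists k, (fun j => w j * t j ^+ 2), (fun j => if t j != 0 then pt j else pt j0).
  split; first by move=> j; apply: mulr_ge0 => //; exact: sqr_ge0.
  split; first exact: e1.
  split; first by move=> j i; case: ifP => h; apply: key.
  apply/matrixP => a a'; rewrite (ord1 a') e2 summxE; apply: eq_bigr => j _.
  rewrite sclE; case: (eqVneq (t j) 0) => [->|htj]; first by ring.
  rewrite /= /pt sclE; field; exact: htj.
Qed.
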